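(* Let $m\geq 4$ be an integer and let $G$ be an $m$-fragile graph. Then: (1) for all non-adjacent $x,y\in V(G)$, $G$ admits an $m$-colouring $c$ with $c(x)=c(y)$; (2) for all distinct $x,y\in V(G)$, $G$ admits an $m$-colouring $c$ with $c(x)\neq c(y)$; (3) for all distinct $x,y,z\in V(G)$, $G$ admits an $m$-colouring $c$ with $c(x)\notin\{c(y),c(z)\}$; (4) for all distinct $x,y,z\in V(G)$ that are not all pairwise adjacent, $G$ admits an $m$-colouring $c$ with $|\{c(x),c(y),c(z)\}|=2$.
   Context: All graphs are finite and simple. A graph is $k$-connected if it has at least $k+1$ vertices and no vertex cutset with at most $k-1$ vertices. For an integer $m\geq 4$, a graph $G$ is $m$-fragile if every $3$-connected subgraph of $G$ is $(m-1)$-colourable. A $k$-colouring of $G$ is a function $c:V(G)\to\{1,\dots,k\}$ with $c(x)\neq c(y)$ for every edge $xy$. *)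

(* Defs.v *)
(* A finite simple graph is a symmetric irreflexive
   relation [e] on a finType [T]. *)
From mathcomp Require Import all_boot all_order.
From mathcomp Require Import fingraph.
Set Implicit Arguments. Unset Strict Implicit. Unset Printing Implicit Defensive.

Section Graphs.
Variable T : finType.

Definition is_subgraph (e : rel T) (S : {set T}) (E : rel T) : Prop :=
  symmetric E /\ forall x y, E x y -> [&& x \in S, y \in S & e x y].

Definition connected_on (S : {set T}) (E : rel T) : Prop :=
  forall u v, u \in S -> v \in S ->
    connect (fun a b => [&& a \in S, b \in S & E a b]) u v.

Definition k_connected (k : nat) (S : {set T}) (E : rel T) : Prop :=
  k < #|S| /\
  forall X : {set T}, X \subset S -> #|X| < k -> connected_on (S :\: X) E.

Definition is_colouring (k : nat) (S : {set T}) (E : rel T) (c : T -> 'I_k) : Prop :=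
  forall x y, x \in S -> y \in S -> E x y -> c x != c y.

Definition colourable (k : nat) (S : {set T}) (E : rel T) : Prop :=
  exists c : T -> 'I_k, is_colouring S E c.

Definition fragile (m : nat) (e : rel T) : Prop :=
  forall (S : {set T}) (E : rel T),
    is_subgraph e S E -> k_connected 3 S E -> colourable m.-1 S E.

End Graphs.

(* Main.v *)
Require Import Defs.
From mathcomp Require Import all_boot all_order.
From mathcomp Require Import fingraph fingroup perm zify.
Set Implicit Arguments. Unset Strict Implicit. Unset Printing Implicit Defensive.

Lemma perm_ext n (st : seq ('I_n * 'I_n)) :
  {in st &, forall p q, (p.1 == q.1) = (p.2 == q.2)} ->
  exists s : {perm 'I_n}, forall p, p \in st -> s p.1 = p.2.
Proof.
elim: st => [|p st IH] H; first by exists 1%g.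
have H' : {in st &, forall p q, (p.1 == q.1) = (p.2 == q.2)}.
  by move=> x y hx hy; apply: H; rewrite inE ?hx ?hy orbT.
have [s hs] := IH H'.
case: (boolP (has (fun q => q.1 == p.1) st)) => [/hasP [q hq /eqP hq1]|hn].
  exists s => r; rewrite inE => /orP [/eqP ->|]; last exact: hs.
  have := H q p; rewrite inE hq orbT inE eqxx => /(_ isT isT).
  rewrite hq1 eqxx => /esym /eqP <-; by rewrite -hq1 hs.
exists (s * tperm (s p.1) p.2)%g => r; rewrite inE permM => /orP [/eqP ->|hr].
  by rewrite tpermL.
rewrite hs //.
have r1 : r.1 != p.1 by apply/negP => /eqP e1; case/negP: hn; apply/hasP; exists r; rewrite // e1.
have r2 : r.2 != p.2.
  by have := H r p; rewrite inE hr orbT inE eqxx => /(_ isT isT) <-.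
rewrite tpermD // -(hs r hr) ?(inj_eq perm_inj) eq_sym //.
all: try by rewrite (hs r hr).
Qed.

Ltac isord x := let T := type of x in let T' := eval hnf in T in lazymatch T' with ordinal _ => idtac end.
Ltac revcol := repeat match goal with
 | H : is_true (?x == ?y) |- _ => isord x; revert H
 | H : is_true (?x != ?y) |- _ => isord x; revert H
 | H : (?x == ?y) = _ |- _ => isord x; revert H
 | H : is_true (_ || _) |- _ => revert H
 | H : is_true (_ && _) |- _ => revert H
 | H : ?x = ?y |- _ => isord x; move/eqP: H
 end.
Ltac cs := try (match goal with |- ?x = ?y => isord x; apply/eqP end); revcol; rewrite -?val_eqE /=; have := hm; repeat match goal with H : _ |- _ => clear H end; lia.

Section Main.
Variables (T : finType) (e : rel T) (m : nat).
Hypotheses (e_sym : symmetric e) (e_irr : irreflexive e) (hm : 4 <= m).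

Definition col (S : {set T}) (c : T -> 'I_m) := is_colouring S e c.

Lemma col_sub (S1 S2 : {set T}) c : S1 \subset S2 -> col S2 c -> col S1 c.
Proof. by move=> /subsetP h hc x y hx hy; apply: hc; apply: h. Qed.

Lemma free3 (x y z : 'I_m) : exists t : 'I_m, [&& t != x, t != y & t != z].
Proof.
case: (pickP (fun t : 'I_m => [&& t != x, t != y & t != z])) => [t ht|H]; first by exists t.
have : #|'I_m| <= #|[:: x; y; z]|.
  apply: subset_leq_card; apply/subsetP => t _.
  by have := H t; rewrite !inE; case: (t == x); case: (t == y); case: (t == z).
rewrite card_ord => h; have := leq_trans h (card_size _) => /= h2.
by have := leq_trans hm h2.
Qed.

Lemma free4 (x y z w : 'I_m) : 5 <= m -> exists t : 'I_m, [&& t != x, t != y, t != z & t != w].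
Proof.
move=> hm5; case: (pickP (fun t : 'I_m => [&& t != x, t != y, t != z & t != w])) => [t ht|H]; first by exists t.
have : #|'I_m| <= #|[:: x; y; z; w]|.
  apply: subset_leq_card; apply/subsetP => t _.
  by have := H t; rewrite !inE; case: (t == x); case: (t == y); case: (t == z); case: (t == w).
rewrite card_ord => h; have := leq_trans h (card_size _) => /= h2.
by have := leq_trans hm5 h2.
Qed.

Definition sepd (V1 V2 : {set T}) (u v : T) :=
  [/\ u != v, V1 :&: V2 = [set u; v] &
      forall x y, x \in V1 -> x \notin V2 -> y \in V2 -> y \notin V1 -> ~~ e x y].

Lemma glue (S V1 V2 : {set T}) u v c1 c2 b (t : 'I_m) :
  sepd V1 V2 u v -> S \subset V1 :|: V2 ->
  col V1 c1 -> col V2 c2 -> (c1 u == c1 v) = (c2 u == c2 v) -> b \in V2 ->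
  (c2 b == c2 u) = (t == c1 u) -> (c2 b == c2 v) = (t == c1 v) ->
  exists c, [/\ col S c, forall w, w \in V1 -> c w = c1 w & c b = t].
Proof.
move=> [uv hX hne] hS h1 h2 huv hb hbu hbv.
have uX : u \in V1 :&: V2 by rewrite hX !inE eqxx.
have vX : v \in V1 :&: V2 by rewrite hX !inE eqxx orbT.
have H3 : {in [:: (c2 u, c1 u); (c2 v, c1 v); (c2 b, t)] &, forall p q, (p.1 == q.1) = (p.2 == q.2)}.
  move=> p q; rewrite !inE => /or3P [] /eqP -> /or3P [] /eqP -> /=;
    rewrite ?eqxx //.
  all: try by rewrite huv.
  all: try by rewrite eq_sym huv eq_sym.
  all: try by rewrite eq_sym hbu eq_sym.
  all: try by rewrite eq_sym hbv eq_sym.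
  all: try by rewrite hbu.
  all: try by rewrite hbv.
  by rewrite eq_sym -huv eq_sym.
have [s hs] := perm_ext H3.
have su : s (c2 u) = c1 u by apply: (hs (_, _)); rewrite !inE eqxx.
have sv : s (c2 v) = c1 v by apply: (hs (_, _)); rewrite !inE eqxx orbT.
have sb : s (c2 b) = t by apply: (hs (_, _)); rewrite !inE eqxx !orbT.
pose c w := if w \in V1 then c1 w else s (c2 w).
have cV2 : forall w, w \in V2 -> c w = s (c2 w).
  move=> w hw; rewrite /c; case: ifP => // hw1.
  have : w \in V1 :&: V2 by rewrite inE hw1 hw.
  by rewrite hX !inE => /orP [] /eqP ->.
have cV1 : forall w, w \in V1 -> c w = c1 w by move=> w hw; rewrite /c hw.
exists c; split => //; last by rewrite cV2.
move=> x y hx hy hxy.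
have := subsetP hS _ hx; have := subsetP hS _ hy; rewrite !inE.
case hx1: (x \in V1); case hy1: (y \in V1) => /=.
- by move=> _ _; rewrite !cV1 //; apply: (h1 x y).
- move=> hy2 _; case hx2: (x \in V2).
    by rewrite !cV2 // (inj_eq perm_inj); apply: (h2 x y).
  by have := hne _ _ hx1 (negbT hx2) hy2 (negbT hy1); rewrite hxy.
- move=> _ hx2; case hy2: (y \in V2).
    by rewrite !cV2 // (inj_eq perm_inj); apply: (h2 x y).
  by have := hne _ _ hy1 (negbT hy2) hx2 (negbT hx1); rewrite e_sym hxy.
- by move=> hy2 hx2; rewrite !cV2 // (inj_eq perm_inj); apply: (h2 x y).
Qed.


Definition Q0 (S : {set T}) := exists c, col S c.
Definition Q1 (S : {set T}) := forall x y, x \in S -> y \in S -> ~~ e x y ->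
  exists c, col S c /\ c x = c y.
Definition Q2 (S : {set T}) := forall x y, x \in S -> y \in S -> x != y ->
  exists c, col S c /\ c x != c y.
Definition Q3 (S : {set T}) := forall x y z, x \in S -> y \in S -> z \in S ->
  [&& x != y, y != z & x != z] ->
  exists c, col S c /\ (c x != c y) && (c x != c z).
Definition two (a b d : 'I_m) :=
  [|| (a == b) && (a != d), (a == d) && (a != b) | (b == d) && (a != b)].
Definition Q4 (S : {set T}) := forall x y z, x \in S -> y \in S -> z \in S ->
  [&& x != y, y != z & x != z] -> ~~ [&& e x y, e y z & e x z] ->
  exists c, col S c /\ two (c x) (c y) (c z).
Definition Good (S : {set T}) := [/\ Q0 S, Q1 S, Q2 S, Q3 S & Q4 S].

Lemma bT (x y : bool) : x -> y -> x = y. Proof. by move=> -> ->. Qed.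
Lemma bF (x y : bool) : ~~ x -> ~~ y -> x = y. Proof. by move=> /negbTE -> /negbTE ->. Qed.

Section Sep.
Variables (S V1 V2 : {set T}) (u v : T).
Hypotheses (hsep : sepd V1 V2 u v) (hS : S \subset V1 :|: V2).

Lemma uX : u \in V1 :&: V2. Proof. by case: hsep => _ -> _; rewrite !inE eqxx. Qed.
Lemma vX : v \in V1 :&: V2. Proof. by case: hsep => _ -> _; rewrite !inE eqxx orbT. Qed.
Lemma uV1 : u \in V1. Proof. by have := uX; rewrite inE => /andP []. Qed.
Lemma uV2 : u \in V2. Proof. by have := uX; rewrite inE => /andP []. Qed.
Lemma vV1 : v \in V1. Proof. by have := vX; rewrite inE => /andP []. Qed.
Lemma vV2 : v \in V2. Proof. by have := vX; rewrite inE => /andP []. Qed.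
Lemma neq12 x : x \in V1 -> x \notin V2 -> (x != u) && (x != v).
Proof. move=> h1 h2; apply/andP; split; apply/eqP => ex; move: h2; by rewrite ex ?uV2 ?vV2. Qed.
Lemma neq21 x : x \in V2 -> x \notin V1 -> (x != u) && (x != v).
Proof. move=> h1 h2; apply/andP; split; apply/eqP => ex; move: h2; by rewrite ex ?uV1 ?vV1. Qed.
Lemma nab a b : a \in V1 -> a \notin V2 -> b \in V2 -> b \notin V1 -> ~~ e a b.
Proof. by case: hsep => _ _ h; apply: h. Qed.

Lemma gfree c1 c2 b t : col V1 c1 -> col V2 c2 -> (c1 u == c1 v) = (c2 u == c2 v) ->
  b \in V2 -> c2 b != c2 u -> c2 b != c2 v -> t != c1 u -> t != c1 v ->
  exists c, [/\ col S c, c b = t, c u = c1 u, c v = c1 v & forall w, w \in V1 -> c w = c1 w].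
Proof.
move=> h1 h2 huv hb n1 n2 n3 n4.
have [c [hc hw hcb]] := glue (t := t) hsep hS h1 h2 huv hb (bF n1 n3) (bF n2 n4).
by exists c; split => //; apply: hw; rewrite ?uV1 ?vV1.
Qed.

Lemma gu c1 c2 b : col V1 c1 -> col V2 c2 -> (c1 u == c1 v) = (c2 u == c2 v) ->
  b \in V2 -> c2 b = c2 u ->
  exists c, [/\ col S c, c b = c1 u, c u = c1 u, c v = c1 v & forall w, w \in V1 -> c w = c1 w].
Proof.
move=> h1 h2 huv hb eb.
have E1 : (c2 b == c2 u) = (c1 u == c1 u) by rewrite eb !eqxx.
have E2 : (c2 b == c2 v) = (c1 u == c1 v) by rewrite eb huv.
have [c [hc hw hcb]] := glue hsep hS h1 h2 huv hb E1 E2.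
by exists c; split => //; apply: hw; rewrite ?uV1 ?vV1.
Qed.

Lemma gv c1 c2 b : col V1 c1 -> col V2 c2 -> (c1 u == c1 v) = (c2 u == c2 v) ->
  b \in V2 -> c2 b = c2 v ->
  exists c, [/\ col S c, c b = c1 v, c u = c1 u, c v = c1 v & forall w, w \in V1 -> c w = c1 w].
Proof.
move=> h1 h2 huv hb eb.
have E1 : (c2 b == c2 u) = (c1 v == c1 u) by rewrite eb eq_sym -huv eq_sym.
have E2 : (c2 b == c2 v) = (c1 v == c1 v) by rewrite eb !eqxx.
have [c [hc hw hcb]] := glue hsep hS h1 h2 huv hb E1 E2.
by exists c; split => //; apply: hw; rewrite ?uV1 ?vV1.
Qed.

Definition tA (V : {set T}) a := exists c, col V c /\ [&& c u == c v & c a != c u].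
Definition tB (V : {set T}) a := exists c, col V c /\ [&& c u != c v, c a != c u & c a != c v].
Definition tCu (V : {set T}) a := exists c, col V c /\ [&& c u != c v & c a == c u].
Definition tCv (V : {set T}) a := exists c, col V c /\ [&& c u != c v & c a == c v].
Definition tD (V : {set T}) a := exists c, col V c /\ [&& c u == c v & c a == c u].

Lemma facts (V : {set T}) a : Good V -> a \in V -> u \in V -> v \in V -> a != u -> a != v -> u != v ->
  [/\ tA V a \/ tB V a, tB V a \/ tCv V a, tB V a \/ tCu V a,
      ~~ e u v -> tA V a \/ tD V a &
      ~~ [&& e a u, e u v & e a v] -> [\/ tA V a, tCu V a | tCv V a]].
Proof.
move=> [_ q1 _ q3 q4] ha hu hv au av uv; split.
- have [c [hc h]] := q3 a u v ha hu hv ltac:(by rewrite au av uv).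
  case: (eqVneq (c u) (c v)) => E; [left|right]; exists c; split => //; move: h; cs.
- have [c [hc h]] := q3 u a v hu ha hv ltac:(by rewrite eq_sym au av uv).
  case: (eqVneq (c a) (c v)) => E; [right|left]; exists c; split => //; move: h; cs.
- have [c [hc h]] := q3 v a u hv ha hu ltac:(by rewrite eq_sym av au eq_sym uv).
  case: (eqVneq (c a) (c u)) => E; [right|left]; exists c; split => //; move: h; cs.
- move=> nuv; have [c [hc h]] := q1 u v hu hv nuv.
  case: (eqVneq (c a) (c u)) => E; [right|left]; exists c; split => //; cs.
- move=> nt; have [c [hc h]] := q4 a u v ha hu hv ltac:(by rewrite au uv av) nt.
  move: h; rewrite /two => /or3P [] h; [apply: Or32|apply: Or33|apply: Or31];
  exists c; split => //; move: h; cs.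
Qed.

Lemma tA_nuv (V : {set T}) a : u \in V -> v \in V -> tA V a -> ~~ e u v.
Proof. move=> hu hv [c [hc /andP [h _]]]; apply/negP => E; by have := hc u v hu hv E; rewrite h. Qed.
Lemma tD_nuv (V : {set T}) a : u \in V -> v \in V -> tD V a -> ~~ e u v.
Proof. move=> hu hv [c [hc /andP [h _]]]; apply/negP => E; by have := hc u v hu hv E; rewrite h. Qed.


Lemma lF c1 c2 b t (P : (T -> 'I_m) -> Prop) : col V1 c1 -> col V2 c2 -> b \in V2 ->
  (c1 u == c1 v) = (c2 u == c2 v) -> c2 b != c2 u -> c2 b != c2 v -> t != c1 u -> t != c1 v ->
  (forall c, c b = t -> (forall w, w \in V1 -> c w = c1 w) -> P c) -> exists c, col S c /\ P c.
Proof.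
move=> h1 h2 hb E n1 n2 n3 n4 H.
have [c [hc hcb _ _ hV]] := gfree h1 h2 E hb n1 n2 n3 n4.
by exists c; split => //; apply: H.
Qed.
Lemma lU c1 c2 b (P : (T -> 'I_m) -> Prop) : col V1 c1 -> col V2 c2 -> b \in V2 ->
  (c1 u == c1 v) = (c2 u == c2 v) -> c2 b == c2 u ->
  (forall c, c b = c1 u -> (forall w, w \in V1 -> c w = c1 w) -> P c) -> exists c, col S c /\ P c.
Proof.
move=> h1 h2 hb E /eqP n1 H.
have [c [hc hcb _ _ hV]] := gu h1 h2 E hb n1.
by exists c; split => //; apply: H.
Qed.
Lemma lV c1 c2 b (P : (T -> 'I_m) -> Prop) : col V1 c1 -> col V2 c2 -> b \in V2 ->
  (c1 u == c1 v) = (c2 u == c2 v) -> c2 b == c2 v ->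
  (forall c, c b = c1 v -> (forall w, w \in V1 -> c w = c1 w) -> P c) -> exists c, col S c /\ P c.
Proof.
move=> h1 h2 hb E /eqP n1 H.
have [c [hc hcb _ _ hV]] := gv h1 h2 E hb n1.
by exists c; split => //; apply: H.
Qed.
End Sep.

Ltac fin := let hV := fresh "hV" in move=> ? -> hV; rewrite ?hV //; cs.
Ltac lf H1 H2 h1 h2 hb t := apply: (lF (t := t) H1 H2 h1 h2 hb); [cs|cs|cs|cs|cs|]; fin.
Ltac lu H1 H2 h1 h2 hb := apply: (lU H1 H2 h1 h2 hb); [cs|cs|]; fin.
Ltac lv H1 H2 h1 h2 hb := apply: (lV H1 H2 h1 h2 hb); [cs|cs|]; fin.
Ltac lf3 H1 H2 h1 h2 hb x y z := let t := fresh "t" in let ht := fresh "ht" in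
  have [t ht] := free3 x y z; move/and3P: ht => [? ? ?]; lf H1 H2 h1 h2 hb t.

Section Core.
Variables (S V1 V2 : {set T}) (u v : T).
Hypotheses (hsep : sepd V1 V2 u v) (hS : S \subset V1 :|: V2) (G1 : Good V1) (G2 : Good V2).
Variables (a b : T).
Hypotheses (ha1 : a \in V1) (ha2 : a \notin V2) (hb2 : b \in V2) (hb1 : b \notin V1).

Lemma C1 : exists c, col S c /\ c a = c b.
Proof.
have u1 := uV1 hsep; have u2 := uV2 hsep; have v1 := vV1 hsep; have v2 := vV2 hsep.
have /andP [au av] := neq12 hsep ha1 ha2; have /andP [bu bv] := neq21 hsep hb2 hb1.
have uv : u != v by case: hsep.
have [F1a F2a F3a F4a F7a] := facts G1 ha1 u1 v1 au av uv.
have [F1b F2b F3b F4b F7b] := facts G2 hb2 u2 v2 bu bv uv.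
have AA : tA u v V1 a -> tA u v V2 b -> exists c, col S c /\ c a = c b.
  move=> [c1 [h1 /andP [p1 p2]]] [c2 [h2 /andP [q1 q2]]]; lf hsep hS h1 h2 hb2 (c1 a).
have BB : tB u v V1 a -> tB u v V2 b -> exists c, col S c /\ c a = c b.
  move=> [c1 [h1 /and3P [p1 p2 p3]]] [c2 [h2 /and3P [q1 q2 q3]]]; lf hsep hS h1 h2 hb2 (c1 a).
have CC : tCu u v V1 a -> tCu u v V2 b -> exists c, col S c /\ c a = c b.
  move=> [c1 [h1 /andP [p1 p2]]] [c2 [h2 /andP [q1 q2]]]; lu hsep hS h1 h2 hb2.
have DD : tCv u v V1 a -> tCv u v V2 b -> exists c, col S c /\ c a = c b.
  move=> [c1 [h1 /andP [p1 p2]]] [c2 [h2 /andP [q1 q2]]]; lv hsep hS h1 h2 hb2.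
case: F1a => [A1|B1]; case: F1b => [A2|B2]; try by [apply: AA|apply: BB].
- have nuv := tA_nuv u1 v1 A1.
  case: F2a => [B1|Cv1]; first by apply: BB.
  case: F3a => [B1|Cu1]; first by apply: BB.
  case: (F7b ltac:(by rewrite (negbTE nuv) andbF)) => [A2|Cu2|Cv2];
   by [apply: AA|apply: CC|apply: DD].
- have nuv := tA_nuv u2 v2 A2.
  case: F2b => [B2|Cv2]; first by apply: BB.
  case: F3b => [B2|Cu2]; first by apply: BB.
  case: (F7a ltac:(by rewrite (negbTE nuv) andbF)) => [A1|Cu1|Cv1];
   by [apply: AA|apply: CC|apply: DD].
Qed.


Lemma C2 : exists c, col S c /\ c a != c b.
Proof.
have u1 := uV1 hsep; have u2 := uV2 hsep; have v1 := vV1 hsep; have v2 := vV2 hsep.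
have /andP [au av] := neq12 hsep ha1 ha2; have /andP [bu bv] := neq21 hsep hb2 hb1.
have uv : u != v by case: hsep.
have [F1a F2a F3a F4a F7a] := facts G1 ha1 u1 v1 au av uv.
have [F1b F2b F3b F4b F7b] := facts G2 hb2 u2 v2 bu bv uv.
have L : forall c1 c2, col V1 c1 -> col V2 c2 -> (c1 u == c1 v) = (c2 u == c2 v) ->
  c2 b != c2 u -> c2 b != c2 v -> exists c, col S c /\ c a != c b.
  move=> c1 c2 h1 h2 E n1 n2; lf3 hsep hS h1 h2 hb2 (c1 u) (c1 v) (c1 a).
case: F1b => [[c2 [h2 /andP [q1 q2]]]|[c2 [h2 /and3P [q1 q2 q3]]]].
- have nuv : ~~ e u v by apply/negP => E; have := h2 u v u2 v2 E; rewrite q1.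
  case: (F4a nuv) => [[c1 [h1 /andP [p1 p2]]]|[c1 [h1 /andP [p1 p2]]]]; apply: (L c1 c2) => //; cs.
- case: F2a => [[c1 [h1 /and3P [p1 p2 p3]]]|[c1 [h1 /andP [p1 p2]]]]; apply: (L c1 c2) => //; cs.
Qed.

Lemma C4 : exists c, col S c /\ (c b != c a) && (c b != c u).
Proof.
have u1 := uV1 hsep; have u2 := uV2 hsep; have v1 := vV1 hsep; have v2 := vV2 hsep.
have /andP [au av] := neq12 hsep ha1 ha2; have /andP [bu bv] := neq21 hsep hb2 hb1.
have uv : u != v by case: hsep.
have [F1a F2a F3a F4a F7a] := facts G1 ha1 u1 v1 au av uv.
have [F1b F2b F3b F4b F7b] := facts G2 hb2 u2 v2 bu bv uv.
have L : forall c1 c2, col V1 c1 -> col V2 c2 -> (c1 u == c1 v) = (c2 u == c2 v) ->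
  c2 b != c2 u -> c2 b != c2 v -> exists c, col S c /\ (c b != c a) && (c b != c u).
  move=> c1 c2 h1 h2 E n1 n2; lf3 hsep hS h1 h2 hb2 (c1 u) (c1 v) (c1 a).
case: F1b => [[c2 [h2 /andP [q1 q2]]]|[c2 [h2 /and3P [q1 q2 q3]]]].
- have nuv : ~~ e u v by apply/negP => E; have := h2 u v u2 v2 E; rewrite q1.
  case: (F4a nuv) => [[c1 [h1 /andP [p1 p2]]]|[c1 [h1 /andP [p1 p2]]]]; apply: (L c1 c2) => //; cs.
- case: F2a => [[c1 [h1 /and3P [p1 p2 p3]]]|[c1 [h1 /andP [p1 p2]]]]; apply: (L c1 c2) => //; cs.
Qed.

Lemma C3 : exists c, col S c /\ (c a != c b) && (c a != c u).
Proof.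
have u1 := uV1 hsep; have u2 := uV2 hsep; have v1 := vV1 hsep; have v2 := vV2 hsep.
have /andP [au av] := neq12 hsep ha1 ha2; have /andP [bu bv] := neq21 hsep hb2 hb1.
have uv : u != v by case: hsep.
have [F1a F2a F3a F4a F7a] := facts G1 ha1 u1 v1 au av uv.
have [F1b F2b F3b F4b F7b] := facts G2 hb2 u2 v2 bu bv uv.
case: F2a => [[c1 [h1 /and3P [p1 p2 p3]]]|[c1 [h1 /andP [p1 p2]]]].
- case: F2b => [[c2 [h2 /and3P [q1 q2 q3]]]|[c2 [h2 /andP [q1 q2]]]].
  + lf3 hsep hS h1 h2 hb2 (c1 u) (c1 v) (c1 a).
  + lv hsep hS h1 h2 hb2.
- case: F3b => [[c2 [h2 /and3P [q1 q2 q3]]]|[c2 [h2 /andP [q1 q2]]]].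
  + lf3 hsep hS h1 h2 hb2 (c1 u) (c1 v) (c1 a).
  + lu hsep hS h1 h2 hb2.
Qed.

Lemma C5 : exists c, col S c /\ (c u != c a) && (c u != c b).
Proof.
have u1 := uV1 hsep; have u2 := uV2 hsep; have v1 := vV1 hsep; have v2 := vV2 hsep.
have /andP [au av] := neq12 hsep ha1 ha2; have /andP [bu bv] := neq21 hsep hb2 hb1.
have uv : u != v by case: hsep.
have [F1a F2a F3a F4a F7a] := facts G1 ha1 u1 v1 au av uv.
have [F1b F2b F3b F4b F7b] := facts G2 hb2 u2 v2 bu bv uv.
case: F2a => [[c1 [h1 /and3P [p1 p2 p3]]]|[c1 [h1 /andP [p1 p2]]]];
case: F2b => [[c2 [h2 /and3P [q1 q2 q3]]]|[c2 [h2 /andP [q1 q2]]]].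
all: try by lf3 hsep hS h1 h2 hb2 (c1 u) (c1 v) (c1 a).
all: by lv hsep hS h1 h2 hb2.
Qed.

Lemma C6 : exists c, col S c /\ two (c a) (c b) (c u).
Proof.
rewrite /two.
have u1 := uV1 hsep; have u2 := uV2 hsep; have v1 := vV1 hsep; have v2 := vV2 hsep.
have /andP [au av] := neq12 hsep ha1 ha2; have /andP [bu bv] := neq21 hsep hb2 hb1.
have uv : u != v by case: hsep.
have [F1a F2a F3a F4a F7a] := facts G1 ha1 u1 v1 au av uv.
have [F1b F2b F3b F4b F7b] := facts G2 hb2 u2 v2 bu bv uv.
have AA : tA u v V1 a -> tA u v V2 b -> exists c, col S c /\ two (c a) (c b) (c u).
  rewrite /two.
  move=> [c1 [h1 /andP [p1 p2]]] [c2 [h2 /andP [q1 q2]]]; lf hsep hS h1 h2 hb2 (c1 a).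
case: F1a => [A1|[c1 [h1 /and3P [p1 p2 p3]]]].
- case: F1b => [A2|[c2 [h2 /and3P [q1 q2 q3]]]]; first by apply: AA.
  have nuv := tA_nuv u1 v1 A1.
  case: (F4b nuv) => [A2|[c2' [h2' /andP [q1' q2']]]]; first by apply: AA.
  case: A1 => [c1 [h1 /andP [p1 p2]]]; lu hsep hS h1 h2' hb2.
- case: F1b => [A2|[c2 [h2 /and3P [q1 q2 q3]]]]; last by lf hsep hS h1 h2 hb2 (c1 a).
  have nuv := tA_nuv u2 v2 A2.
  case: (F4a nuv) => [A1|[c1' [h1' /andP [p1' p2']]]]; first by apply: AA.
  case: A2 => [c2 [h2 /andP [q1 q2]]]; lf3 hsep hS h1' h2 hb2 (c1' u) (c1' v) (c1' a).
Qed.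

End Core.

Section Core3.
Variables (S V1 V2 : {set T}) (u v : T).
Hypotheses (hsep : sepd V1 V2 u v) (hS : S \subset V1 :|: V2) (G1 : Good V1) (G2 : Good V2).
Hypothesis hK : forall p q r s, [&& e p q, e p r, e p s, e q r, e q s & e r s] -> 5 <= m.
Variables (a1 a2 b : T).
Hypotheses (ha1 : a1 \in V1) (ha1' : a1 \notin V2) (ha2 : a2 \in V1) (ha2' : a2 \notin V2)
  (hb2 : b \in V2) (hb1 : b \notin V1) (h12 : a1 != a2).

Lemma C7 : exists c, col S c /\ (c a1 != c a2) && (c a1 != c b).
Proof.
have u1 := uV1 hsep; have u2 := uV2 hsep; have v1 := vV1 hsep; have v2 := vV2 hsep.
have /andP [a1u a1v] := neq12 hsep ha1 ha1'; have /andP [a2u a2v] := neq12 hsep ha2 ha2'.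
have /andP [bu bv] := neq21 hsep hb2 hb1.
have uv : u != v by case: hsep.
have [F1b F2b F3b F4b F7b] := facts G2 hb2 u2 v2 bu bv uv.
case: G1 => [g0 g1 g2 g3 g4].
have [c1 [h1 /andP [p1 p2]]] := g3 a1 a2 u ha1 ha2 u1 ltac:(by rewrite h12 a2u a1u).
case: (eqVneq (c1 u) (c1 v)) => E.
- have nuv : ~~ e u v by apply/negP => Euv; have := h1 u v u1 v1 Euv; rewrite E eqxx.
  case: (F4b nuv) => [[c2 [h2 /andP [q1 q2]]]|[c2 [h2 /andP [q1 q2]]]].
  + lf3 hsep hS h1 h2 hb2 (c1 u) (c1 v) (c1 a1).
  + lu hsep hS h1 h2 hb2.
- case: F3b => [[c2 [h2 /and3P [q1 q2 q3]]]|[c2 [h2 /andP [q1 q2]]]].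
  + lf3 hsep hS h1 h2 hb2 (c1 u) (c1 v) (c1 a1).
  + lu hsep hS h1 h2 hb2.
Qed.

Lemma C8 : exists c, col S c /\ (c b != c a1) && (c b != c a2).
Proof.
have u1 := uV1 hsep; have u2 := uV2 hsep; have v1 := vV1 hsep; have v2 := vV2 hsep.
have /andP [a1u a1v] := neq12 hsep ha1 ha1'; have /andP [a2u a2v] := neq12 hsep ha2 ha2'.
have /andP [bu bv] := neq21 hsep hb2 hb1.
have uv : u != v by case: hsep.
have [F1b F2b F3b F4b F7b] := facts G2 hb2 u2 v2 bu bv uv.
case: G1 => [g0 g1 g2 g3 g4].
have HA : tA u v V2 b -> exists c, col S c /\ (c b != c a1) && (c b != c a2).
  move=> A2; have nuv := tA_nuv u2 v2 A2; case: A2 => [c2 [h2 /andP [q1 q2]]].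
  have [c1 [h1 E]] := g1 u v u1 v1 nuv.
  lf3 hsep hS h1 h2 hb2 (c1 u) (c1 a1) (c1 a2).
case: F1b => [A2|[c2 [h2 /and3P [q1 q2 q3]]]]; first by apply: HA.
case: (boolP (e u v)) => euv.
- case: (boolP (e a1 a2)) => e12.
  + case: (boolP (e a2 u && e a1 u)) => t1.
    * case: (boolP (e a2 v && e a1 v)) => t2.
      - have m5 : 5 <= m.
          apply: (hK (p := a1) (q := a2) (r := u) (s := v)).
          by move: t1 t2; rewrite e12 euv e_sym => /andP [-> ->] /andP [-> ->].
        have [c1 h1] := g0.
        have n1 := h1 u v u1 v1 euv.
        have [t /and4P [t1' t2' t3' t4']] := free4 (c1 u) (c1 v) (c1 a1) (c1 a2) m5.
        lf hsep hS h1 h2 hb2 t.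
      - have [c1 [h1 p]] := g4 a1 a2 v ha1 ha2 v1 ltac:(by rewrite h12 a2v a1v)
          ltac:(by rewrite negb_and t2 orbT).
        have n1 := h1 u v u1 v1 euv; have n2 := h1 a1 a2 ha1 ha2 e12.
        move: p; rewrite /two => p.
        lf3 hsep hS h1 h2 hb2 (c1 u) (c1 a1) (c1 a2).
    * have [c1 [h1 p]] := g4 a1 a2 u ha1 ha2 u1 ltac:(by rewrite h12 a2u a1u)
          ltac:(by rewrite negb_and t1 orbT).
      have n1 := h1 u v u1 v1 euv; have n2 := h1 a1 a2 ha1 ha2 e12.
      move: p; rewrite /two => p.
      lf3 hsep hS h1 h2 hb2 (c1 v) (c1 a1) (c1 a2).
  + have [c1 [h1 E]] := g1 a1 a2 ha1 ha2 e12.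
    have n1 := h1 u v u1 v1 euv.
    lf3 hsep hS h1 h2 hb2 (c1 u) (c1 v) (c1 a1).
- case: (F4b euv) => [A2|[c2' [h2' /andP [q1' q2']]]]; first by apply: HA.
  case: (F7b ltac:(by rewrite (negbTE euv) andbF)) => [A2|[c3 [h3 /andP [r1 r2]]]|[c3 [h3 /andP [r1 r2]]]];
    first by apply: HA.
  + have [c1 [h1 p]] := g3 u a1 a2 u1 ha1 ha2 ltac:(by rewrite eq_sym a1u h12 eq_sym a2u).
    case: (eqVneq (c1 u) (c1 v)) => E.
    * lu hsep hS h1 h2' hb2.
    * lu hsep hS h1 h3 hb2.
  + have [c1 [h1 p]] := g3 v a1 a2 v1 ha1 ha2 ltac:(by rewrite eq_sym a1v h12 eq_sym a2v).
    case: (eqVneq (c1 u) (c1 v)) => E.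
    * lu hsep hS h1 h2' hb2.
    * lv hsep hS h1 h3 hb2.
Qed.

Lemma C9 : exists c, col S c /\ two (c a1) (c a2) (c b).
Proof.
have u1 := uV1 hsep; have u2 := uV2 hsep; have v1 := vV1 hsep; have v2 := vV2 hsep.
have /andP [a1u a1v] := neq12 hsep ha1 ha1'; have /andP [a2u a2v] := neq12 hsep ha2 ha2'.
have /andP [bu bv] := neq21 hsep hb2 hb1.
have uv : u != v by case: hsep.
have [F1b F2b F3b F4b F7b] := facts G2 hb2 u2 v2 bu bv uv.
case: G1 => [g0 g1 g2 g3 g4].
rewrite /two.
case: (boolP (e a1 a2)) => e12.
- have HA : tA u v V2 b -> exists c, col S c /\
     [|| (c a1 == c a2) && (c a1 != c b), (c a1 == c b) && (c a1 != c a2)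
       | (c a2 == c b) && (c a1 != c a2)].
    move=> A2; have nuv := tA_nuv u2 v2 A2; case: A2 => [c2 [h2 /andP [q1 q2]]].
    have [c1 [h1 E]] := g1 u v u1 v1 nuv.
    have n2 := h1 a1 a2 ha1 ha2 e12.
    case: (eqVneq (c1 a1) (c1 u)) => E2.
    + lf hsep hS h1 h2 hb2 (c1 a2).
    + lf hsep hS h1 h2 hb2 (c1 a1).
  case: F1b => [A2|[c2 [h2 /and3P [q1 q2 q3]]]]; first by apply: HA.
  case: (boolP (e u v)) => euv.
  + have [c1 [h1 p]] := g3 a1 u v ha1 u1 v1 ltac:(by rewrite a1u uv a1v).
    have n1 := h1 u v u1 v1 euv; have n2 := h1 a1 a2 ha1 ha2 e12.
    lf hsep hS h1 h2 hb2 (c1 a1).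
  + case: (F4b euv) => [A2|[c2' [h2' /andP [q1' q2']]]]; first by apply: HA.
    case: (F7b ltac:(by rewrite (negbTE euv) andbF)) => [A2|[c3 [h3 /andP [r1 r2]]]|[c3 [h3 /andP [r1 r2]]]];
      first by apply: HA.
    * case: (boolP (e a2 u && e a1 u)) => tr.
      - case/andP: tr => tr1 tr2.
        have [c1 [h1 p]] := g2 u v u1 v1 uv.
        have n2 := h1 a1 a2 ha1 ha2 e12; have n3 := h1 a2 u ha2 u1 tr1; have n4 := h1 a1 u ha1 u1 tr2.
        case: (eqVneq (c1 a1) (c1 v)) => E.
        ++ lf hsep hS h1 h2 hb2 (c1 a2).
        ++ lf hsep hS h1 h2 hb2 (c1 a1).
      - have [c1 [h1 p]] := g4 a1 a2 u ha1 ha2 u1 ltac:(by rewrite h12 a2u a1u)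
          ltac:(by rewrite negb_and tr orbT).
        have n2 := h1 a1 a2 ha1 ha2 e12.
        move: p; rewrite /two => p.
        case: (eqVneq (c1 u) (c1 v)) => E.
        ++ lu hsep hS h1 h2' hb2.
        ++ lu hsep hS h1 h3 hb2.
    * case: (boolP (e a2 v && e a1 v)) => tr.
      - case/andP: tr => tr1 tr2.
        have [c1 [h1 p]] := g2 u v u1 v1 uv.
        have n2 := h1 a1 a2 ha1 ha2 e12; have n3 := h1 a2 v ha2 v1 tr1; have n4 := h1 a1 v ha1 v1 tr2.
        case: (eqVneq (c1 a1) (c1 u)) => E.
        ++ lf hsep hS h1 h2 hb2 (c1 a2).
        ++ lf hsep hS h1 h2 hb2 (c1 a1).
      - have [c1 [h1 p]] := g4 a1 a2 v ha1 ha2 v1 ltac:(by rewrite h12 a2v a1v)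
          ltac:(by rewrite negb_and tr orbT).
        have n2 := h1 a1 a2 ha1 ha2 e12.
        move: p; rewrite /two => p.
        case: (eqVneq (c1 u) (c1 v)) => E.
        ++ lv hsep hS h1 h2' hb2.
        ++ lv hsep hS h1 h3 hb2.
- have [c1 [h1 E]] := g1 a1 a2 ha1 ha2 e12.
  case: (eqVneq (c1 u) (c1 v)) => E1.
  + have nuv : ~~ e u v by apply/negP => Euv; have := h1 u v u1 v1 Euv; rewrite E1 eqxx.
    case: (F4b nuv) => [[c2 [h2 /andP [q1 q2]]]|[c2 [h2 /andP [q1 q2]]]].
    * lf3 hsep hS h1 h2 hb2 (c1 u) (c1 v) (c1 a1).
    * case: (eqVneq (c1 u) (c1 a1)) => E2; last by lu hsep hS h1 h2 hb2.
      case: (F7b ltac:(by rewrite (negbTE nuv) andbF)) => [[c3 [h3 /andP [r1 r2]]]|[c3 [h3 /andP [r1 r2]]]|[c3 [h3 /andP [r1 r2]]]].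
      - lf3 hsep hS h1 h3 hb2 (c1 u) (c1 v) (c1 a1).
      - have [c1' [h1' p]] := g4 a1 a2 u ha1 ha2 u1 ltac:(by rewrite h12 a2u a1u)
          ltac:(by rewrite (negbTE e12)).
        move: p; rewrite /two => p.
        case: (eqVneq (c1' u) (c1' v)) => E'.
        ++ lu hsep hS h1' h2 hb2.
        ++ lu hsep hS h1' h3 hb2.
      - have [c1' [h1' p]] := g4 a1 a2 v ha1 ha2 v1 ltac:(by rewrite h12 a2v a1v)
          ltac:(by rewrite (negbTE e12)).
        move: p; rewrite /two => p.
        case: (eqVneq (c1' u) (c1' v)) => E'.
        ++ lu hsep hS h1' h2 hb2.
        ++ lv hsep hS h1' h3 hb2.
  + case: F3b => [[c2 [h2 /and3P [q1 q2 q3]]]|[c2 [h2 /andP [q1 q2]]]].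
    * lf3 hsep hS h1 h2 hb2 (c1 u) (c1 v) (c1 a1).
    * case: (eqVneq (c1 u) (c1 a1)) => E2; last by lu hsep hS h1 h2 hb2.
      case: F2b => [[c3 [h3 /and3P [r1 r2 r3]]]|[c3 [h3 /andP [r1 r2]]]].
      - lf3 hsep hS h1 h3 hb2 (c1 u) (c1 v) (c1 a1).
      - lv hsep hS h1 h3 hb2.
Qed.

End Core3.


Section Assembly.
Hypothesis hK : forall p q r s, [&& e p q, e p r, e p s, e q r, e q s & e r s] -> 5 <= m.

Lemma use (S : {set T}) (P Q : (T -> 'I_m) -> Prop) :
  (exists c, col S c /\ P c) -> (forall c, P c -> Q c) -> exists c, col S c /\ Q c.
Proof. by move=> [c [hc hp]] H; exists c; split => //; apply: H. Qed.

Lemma sep_uv V1 V2 u v : sepd V1 V2 u v -> sepd V1 V2 v u.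
Proof. case=> uv hX hne; split => //; [by rewrite eq_sym | by rewrite hX setUC]. Qed.
Lemma sep_sw V1 V2 u v : sepd V1 V2 u v -> sepd V2 V1 u v.
Proof.
case=> uv hX hne; split => //; first by rewrite setIC.
by move=> x y h1 h2 h3 h4; rewrite e_sym; apply: hne.
Qed.
Lemma sub_sw (S V1 V2 : {set T}) : S \subset V1 :|: V2 -> S \subset V2 :|: V1.
Proof. by rewrite setUC. Qed.

Lemma inX V1 V2 u v w : sepd V1 V2 u v -> w \in V1 -> w \in V2 -> (w = u) \/ (w = v).
Proof.
case=> _ hX _ h1 h2; have : w \in V1 :&: V2 by rewrite inE h1 h2.
by rewrite hX !inE => /orP [] /eqP ->; [left|right].
Qed.

Section W.
Variables (S V1 V2 : {set T}) (u v : T).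
Hypotheses (hsep : sepd V1 V2 u v) (hS : S \subset V1 :|: V2) (G1 : Good V1) (G2 : Good V2).
Variables (a b w : T).
Hypotheses (ha1 : a \in V1) (ha2 : a \notin V2) (hb2 : b \in V2) (hb1 : b \notin V1)
  (hw1 : w \in V1) (hw2 : w \in V2).

Lemma C3w : exists c, col S c /\ (c a != c b) && (c a != c w).
Proof. by case: (inX hsep hw1 hw2) => ->; [exact: (C3 hsep hS G1 G2 ha1 ha2 hb2 hb1)|exact: (C3 (sep_uv hsep) hS G1 G2 ha1 ha2 hb2 hb1)]. Qed.
Lemma C4w : exists c, col S c /\ (c b != c a) && (c b != c w).
Proof. by case: (inX hsep hw1 hw2) => ->; [exact: (C4 hsep hS G1 G2 ha1 ha2 hb2 hb1)|exact: (C4 (sep_uv hsep) hS G1 G2 ha1 ha2 hb2 hb1)]. Qed.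
Lemma C5w : exists c, col S c /\ (c w != c a) && (c w != c b).
Proof. by case: (inX hsep hw1 hw2) => ->; [exact: (C5 hsep hS G1 G2 ha1 ha2 hb2 hb1)|exact: (C5 (sep_uv hsep) hS G1 G2 ha1 ha2 hb2 hb1)]. Qed.
Lemma C6w : exists c, col S c /\ two (c a) (c b) (c w).
Proof. by case: (inX hsep hw1 hw2) => ->; [exact: (C6 hsep hS G1 G2 ha1 ha2 hb2 hb1)|exact: (C6 (sep_uv hsep) hS G1 G2 ha1 ha2 hb2 hb1)]. Qed.
End W.


Section Lone.
Variables (S V1 V2 : {set T}) (u v : T).
Hypotheses (hsep : sepd V1 V2 u v) (hS : S \subset V1 :|: V2) (G1 : Good V1) (G2 : Good V2).

Lemma other x : x \in S -> x \notin V1 -> x \in V2.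
Proof. by move=> /(subsetP hS); rewrite inE => /orP [->|]. Qed.

Lemma Q3_lone x y z : x \in S -> y \in S -> z \in S -> [&& x != y, y != z & x != z] ->
  [|| [&& x \notin V1, y \in V1 & z \in V1], [&& y \notin V1, x \in V1 & z \in V1]
    | [&& z \notin V1, x \in V1 & y \in V1]] ->
  [|| x \notin V2, y \notin V2 | z \notin V2] ->
  exists c, col S c /\ (c x != c y) && (c x != c z).
Proof.
move=> xS yS zS /and3P [xy yz xz] hl hn.
case/or3P: hl => /and3P [h1 h2 h3].
- have x2 := other xS h1; rewrite x2 /= in hn.
  case: (boolP (y \in V2)) => y2.
  + rewrite y2 /= in hn.
    by apply: (use (C4w hsep hS G1 G2 h3 hn x2 h1 h2 y2)) => c /=; cs.
  + case: (boolP (z \in V2)) => z2.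
    * by apply: (use (C4w hsep hS G1 G2 h2 y2 x2 h1 h3 z2)) => c /=; cs.
    * by apply: (use (C8 hsep hS G1 G2 hK h2 y2 h3 z2 x2 h1 yz)) => c /=; cs.
- have y2 := other yS h1; rewrite y2 /= ?orbF in hn.
  case: (boolP (x \in V2)) => x2.
  + rewrite x2 /= in hn.
    by apply: (use (C5w hsep hS G1 G2 h3 hn y2 h1 h2 x2)) => c /=; cs.
  + case: (boolP (z \in V2)) => z2.
    * by apply: (use (C3w hsep hS G1 G2 h2 x2 y2 h1 h3 z2)) => c /=; cs.
    * by apply: (use (C7 hsep hS G1 G2 h2 x2 h3 z2 y2 h1 xz)) => c /=; cs.
- have z2 := other zS h1; rewrite z2 /= ?orbF in hn.
  case: (boolP (x \in V2)) => x2.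
  + rewrite x2 /= in hn.
    by apply: (use (C5w hsep hS G1 G2 h3 hn z2 h1 h2 x2)) => c /=; cs.
  + case: (boolP (y \in V2)) => y2.
    * by apply: (use (C3w hsep hS G1 G2 h2 x2 z2 h1 h3 y2)) => c /=; cs.
    * by apply: (use (C7 hsep hS G1 G2 h2 x2 h3 y2 z2 h1 xy)) => c /=; cs.
Qed.

Lemma Q4_lone x y z : x \in S -> y \in S -> z \in S -> [&& x != y, y != z & x != z] ->
  [|| [&& x \notin V1, y \in V1 & z \in V1], [&& y \notin V1, x \in V1 & z \in V1]
    | [&& z \notin V1, x \in V1 & y \in V1]] ->
  [|| x \notin V2, y \notin V2 | z \notin V2] ->
  exists c, col S c /\ two (c x) (c y) (c z).
Proof.
move=> xS yS zS /and3P [xy yz xz] hl hn.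
case/or3P: hl => /and3P [h1 h2 h3].
- have x2 := other xS h1; rewrite x2 /= in hn.
  case: (boolP (y \in V2)) => y2.
  + rewrite y2 /= in hn.
    by apply: (use (C6w hsep hS G1 G2 h3 hn x2 h1 h2 y2)) => c /=; rewrite /two; cs.
  + case: (boolP (z \in V2)) => z2.
    * by apply: (use (C6w hsep hS G1 G2 h2 y2 x2 h1 h3 z2)) => c /=; rewrite /two; cs.
    * by apply: (use (C9 hsep hS G1 G2 h2 y2 h3 z2 x2 h1 yz)) => c /=; rewrite /two; cs.
- have y2 := other yS h1; rewrite y2 /= ?orbF in hn.
  case: (boolP (x \in V2)) => x2.
  + rewrite x2 /= in hn.
    by apply: (use (C6w hsep hS G1 G2 h3 hn y2 h1 h2 x2)) => c /=; rewrite /two; cs.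
  + case: (boolP (z \in V2)) => z2.
    * by apply: (use (C6w hsep hS G1 G2 h2 x2 y2 h1 h3 z2)) => c /=; rewrite /two; cs.
    * by apply: (use (C9 hsep hS G1 G2 h2 x2 h3 z2 y2 h1 xz)) => c /=; rewrite /two; cs.
- have z2 := other zS h1; rewrite z2 /= ?orbF in hn.
  case: (boolP (x \in V2)) => x2.
  + rewrite x2 /= in hn.
    by apply: (use (C6w hsep hS G1 G2 h3 hn z2 h1 h2 x2)) => c /=; rewrite /two; cs.
  + case: (boolP (y \in V2)) => y2.
    * by apply: (use (C6w hsep hS G1 G2 h2 x2 z2 h1 h3 y2)) => c /=; rewrite /two; cs.
    * by apply: (use (C9 hsep hS G1 G2 h2 x2 h3 y2 z2 h1 xy)) => c /=; rewrite /two; cs.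
Qed.

Lemma restrict c1 : col V1 c1 -> exists c, col S c /\ forall w, w \in V1 -> c w = c1 w.
Proof.
move=> h1; have u1 := uV1 hsep; have u2 := uV2 hsep; have v1 := vV1 hsep; have v2 := vV2 hsep.
case: G2 => [_ q1 q2 _ _].
case: (eqVneq (c1 u) (c1 v)) => E.
- have nuv : ~~ e u v by apply/negP => Euv; have := h1 u v u1 v1 Euv; rewrite E eqxx.
  have [c2 [h2 E2]] := q1 u v u2 v2 nuv.
  have [c [hc _ _ _ hV]] := gu hsep hS h1 h2 (ltac:(by rewrite E E2 !eqxx)) u2 (erefl _).
  by exists c.
- have uv : u != v by case: hsep.
  have [c2 [h2 E2]] := q2 u v u2 v2 uv.
  have [c [hc _ _ _ hV]] := gu hsep hS h1 h2 (ltac:(by rewrite (negbTE E) (negbTE E2))) u2 (erefl _).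
  by exists c.
Qed.

End Lone.


Lemma GoodS (S V1 V2 : {set T}) u v : sepd V1 V2 u v -> S \subset V1 :|: V2 ->
  Good V1 -> Good V2 -> Good S.
Proof.
move=> hsep hS G1 G2.
have hs' := sep_sw hsep; have hS' := sub_sw hS.
have R1 := restrict hsep hS G2; have R2 := restrict hs' hS' G1.
have memS : forall x, x \in S -> (x \in V1) || (x \in V2).
  by move=> x /(subsetP hS); rewrite inE.
case: (G1) => [p0 p1 p2 p3 p4]; case: (G2) => [r0 r1 r2 r3 r4].
split.
- by have [c1 h1] := p0; have [c [hc _]] := R1 c1 h1; exists c.
- move=> x y xS yS nxy.
  case: (boolP ((x \in V1) && (y \in V1))) => [/andP [x1 y1]|A1].
    have [c1 [h1 E]] := p1 x y x1 y1 nxy; have [c [hc hV]] := R1 c1 h1.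
    by exists c; rewrite !hV.
  case: (boolP ((x \in V2) && (y \in V2))) => [/andP [x2 y2]|A2].
    have [c1 [h1 E]] := r1 x y x2 y2 nxy; have [c [hc hV]] := R2 c1 h1.
    by exists c; rewrite !hV.
  move: (memS x xS) (memS y yS) A1 A2.
  case: (boolP (x \in V1)) => x1; case: (boolP (x \in V2)) => x2;
  case: (boolP (y \in V1)) => y1; case: (boolP (y \in V2)) => y2 //= _ _ _ _.
  + by apply: (C1 hsep hS G1 G2 x1 x2 y2 y1).
  + by apply: (C1 hs' hS' G2 G1 x2 x1 y1 y2).
- move=> x y xS yS nxy.
  case: (boolP ((x \in V1) && (y \in V1))) => [/andP [x1 y1]|A1].
    have [c1 [h1 E]] := p2 x y x1 y1 nxy; have [c [hc hV]] := R1 c1 h1.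
    by exists c; rewrite !hV.
  case: (boolP ((x \in V2) && (y \in V2))) => [/andP [x2 y2]|A2].
    have [c1 [h1 E]] := r2 x y x2 y2 nxy; have [c [hc hV]] := R2 c1 h1.
    by exists c; rewrite !hV.
  move: (memS x xS) (memS y yS) A1 A2.
  case: (boolP (x \in V1)) => x1; case: (boolP (x \in V2)) => x2;
  case: (boolP (y \in V1)) => y1; case: (boolP (y \in V2)) => y2 //= _ _ _ _.
  + by apply: (C2 hsep hS G1 G2 x1 x2 y2 y1).
  + by apply: (C2 hs' hS' G2 G1 x2 x1 y1 y2).
- move=> x y z xS yS zS d.
  case: (boolP [&& x \in V1, y \in V1 & z \in V1]) => [/and3P [x1 y1 z1]|A1].
    have [c1 [h1 E]] := p3 x y z x1 y1 z1 d; have [c [hc hV]] := R1 c1 h1.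
    by exists c; rewrite !hV.
  case: (boolP [&& x \in V2, y \in V2 & z \in V2]) => [/and3P [x2 y2 z2]|A2].
    have [c1 [h1 E]] := r3 x y z x2 y2 z2 d; have [c [hc hV]] := R2 c1 h1.
    by exists c; rewrite !hV.
  have : ([|| [&& x \notin V1, y \in V1 & z \in V1], [&& y \notin V1, x \in V1 & z \in V1]
    | [&& z \notin V1, x \in V1 & y \in V1]] && [|| x \notin V2, y \notin V2 | z \notin V2]) ||
    ([|| [&& x \notin V2, y \in V2 & z \in V2], [&& y \notin V2, x \in V2 & z \in V2]
    | [&& z \notin V2, x \in V2 & y \in V2]] && [|| x \notin V1, y \notin V1 | z \notin V1]).
    move: (memS x xS) (memS y yS) (memS z zS) A1 A2.
    by case: (x \in V1); case: (x \in V2); case: (y \in V1); case: (y \in V2);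
       case: (z \in V1); case: (z \in V2).
  case/orP => /andP [hl hn].
  + exact: (Q3_lone hsep hS G1 G2 xS yS zS d hl hn).
  + exact: (Q3_lone hs' hS' G2 G1 xS yS zS d hl hn).
- move=> x y z xS yS zS d nt.
  case: (boolP [&& x \in V1, y \in V1 & z \in V1]) => [/and3P [x1 y1 z1]|A1].
    have [c1 [h1 E]] := p4 x y z x1 y1 z1 d nt; have [c [hc hV]] := R1 c1 h1.
    by exists c; rewrite !hV.
  case: (boolP [&& x \in V2, y \in V2 & z \in V2]) => [/and3P [x2 y2 z2]|A2].
    have [c1 [h1 E]] := r4 x y z x2 y2 z2 d nt; have [c [hc hV]] := R2 c1 h1.
    by exists c; rewrite !hV.
  have : ([|| [&& x \notin V1, y \in V1 & z \in V1], [&& y \notin V1, x \in V1 & z \in V1]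
    | [&& z \notin V1, x \in V1 & y \in V1]] && [|| x \notin V2, y \notin V2 | z \notin V2]) ||
    ([|| [&& x \notin V2, y \in V2 & z \in V2], [&& y \notin V2, x \in V2 & z \in V2]
    | [&& z \notin V2, x \in V2 & y \in V2]] && [|| x \notin V1, y \notin V1 | z \notin V1]).
    move: (memS x xS) (memS y yS) (memS z zS) A1 A2.
    by case: (x \in V1); case: (x \in V2); case: (y \in V1); case: (y \in V2);
       case: (z \in V1); case: (z \in V2).
  case/orP => /andP [hl hn].
  + exact: (Q4_lone hsep hS G1 G2 xS yS zS d hl hn).
  + exact: (Q4_lone hs' hS' G2 G1 xS yS zS d hl hn).
Qed.


Section Spare.
Variable (S : {set T}).
Variable c0 : T -> 'I_m.-1.
Hypothesis h0 : is_colouring S e c0.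

Lemma spc_lt : m.-1 < m. Proof. by rewrite ltn_predL; apply: leq_trans hm. Qed.
Definition spc : 'I_m := Ordinal spc_lt.
Definition cw (Y : pred T) (w : T) : 'I_m := if Y w then spc else widen_ord (leq_pred m) (c0 w).

Lemma cw_ne (w : T) : widen_ord (leq_pred m) (c0 w) != spc.
Proof. by rewrite -val_eqE /= neq_ltn ltn_ord. Qed.

Lemma cw_col (Y : pred T) : (forall x y, x \in S -> y \in S -> Y x -> Y y -> ~~ e x y) -> col S (cw Y).
Proof.
move=> hY x y xS yS exy; rewrite /cw.
case: (boolP (Y x)) => yx; case: (boolP (Y y)) => yy.
- by have := hY x y xS yS yx yy; rewrite exy.
- by rewrite eq_sym cw_ne.
- by rewrite cw_ne.
- by rewrite -val_eqE /= val_eqE (h0 xS yS exy).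
Qed.

Lemma cw_in (Y : pred T) w : Y w -> cw Y w = spc. Proof. by rewrite /cw => ->. Qed.
Lemma cw_out (Y : pred T) w : ~~ Y w -> cw Y w != spc. Proof. by rewrite /cw => /negbTE ->; apply: cw_ne. Qed.

Lemma spareGood : Good S.
Proof.
split.
- exists (cw pred0); apply: cw_col => x y _ _ //.
- move=> x y xS yS nxy; exists (cw (pred2 x y)); split.
    apply: cw_col => p q pS qS /pred2P [] -> /pred2P [] ->; rewrite ?e_irr // e_sym //.
  by rewrite !cw_in //= eqxx ?orbT.
- move=> x y xS yS nxy; exists (cw (pred1 x)); split.
    by apply: cw_col => p q pS qS /eqP -> /eqP ->; rewrite e_irr.
  have ny : ~~ pred1 x y by rewrite /= eq_sym.
  have := cw_out ny; have /eqP := cw_in (Y := pred1 x) (w := x) (eqxx _); cs.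
- move=> x y z xS yS zS /and3P [xy yz xz]; exists (cw (pred1 x)); split.
    by apply: cw_col => p q pS qS /eqP -> /eqP ->; rewrite e_irr.
  have ny : ~~ pred1 x y by rewrite /= eq_sym.
  have nz : ~~ pred1 x z by rewrite /= eq_sym.
  have := cw_out ny; have := cw_out nz; have /eqP := cw_in (Y := pred1 x) (w := x) (eqxx _); cs.
- move=> x y z xS yS zS /and3P [xy yz xz] nt.
  have H : forall p q r, p \in S -> q \in S -> r \in S -> ~~ e p q -> r != p -> r != q ->
      exists c, col S c /\ [&& c p == c q, c p == spc & c r != spc].
    move=> p q r pS qS rS npq rp rq; exists (cw (pred2 p q)); split.
      apply: cw_col => p' q' pS' qS' /pred2P [] -> /pred2P [] ->; rewrite ?e_irr // e_sym //.
    have nr : ~~ pred2 p q r by rewrite /= negb_or rp rq.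
    have ip : pred2 p q p by rewrite /= eqxx.
    have iq : pred2 p q q by rewrite /= eqxx orbT.
    have := cw_out nr; have /eqP := cw_in ip; have /eqP := cw_in iq; cs.
  rewrite /two.
  case: (boolP (e x y)) => exy.
  + case: (boolP (e y z)) => eyz.
    * have nxz : ~~ e x z by move: nt; rewrite exy eyz.
      have [c [hc E]] := H x z y xS zS yS nxz ltac:(by rewrite eq_sym) yz.
      by exists c; split => //; move: E; cs.
    * have [c [hc E]] := H y z x yS zS xS eyz xy xz.
      by exists c; split => //; move: E; cs.
  + have [c [hc E]] := H x y z xS yS zS exy ltac:(by rewrite eq_sym) ltac:(by rewrite eq_sym).
    by exists c; split => //; move: E; cs.
Qed.

End Spare.


Definition gsep (S V1 V2 : {set T}) :=
  [/\ V1 :|: V2 = S,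
      (forall x y, x \in V1 -> x \notin V2 -> y \in V2 -> y \notin V1 -> ~~ e x y),
      exists x, x \in V1 :\: V2 & exists y, y \in V2 :\: V1].

Lemma gsep_sw S V1 V2 : gsep S V1 V2 -> gsep S V2 V1.
Proof.
case=> hU hne [x hx] [y hy]; split => //; first by rewrite setUC.
- by move=> p q h1 h2 h3 h4; rewrite e_sym; apply: hne.
- by exists y.
- by exists x.
Qed.

Lemma card_split (S V1 V2 : {set T}) : V1 :|: V2 = S ->
  #|S| <= #|V1 :\: V2| + #|V2 :\: V1| + #|V1 :&: V2|.
Proof.
move=> <-.
have -> : V1 :|: V2 = (V1 :\: V2) :|: (V2 :\: V1) :|: (V1 :&: V2).
  apply/setP => x; rewrite !inE; by case: (x \in V1); case: (x \in V2).
by apply: leq_trans (leq_card_setU _ _) _; rewrite leq_add2r leq_card_setU.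
Qed.

Lemma aug1 S V1 V2 : gsep S V1 V2 -> 2 <= #|V1 :\: V2| ->
  exists V1' V2', gsep S V1' V2' /\ #|V1' :&: V2'| = (#|V1 :&: V2|).+1.
Proof.
case=> hU hne [x hx] [y hy] h2.
have [w hw hwx] : exists2 w, w \in V1 :\: V2 & w != x.
  case: (pickP (fun w => (w \in V1 :\: V2) && (w != x))) => [w /andP [h1 h2']|H].
    by exists w.
  have : #|V1 :\: V2| <= #|[set x]|.
    apply: subset_leq_card; apply/subsetP => z hz; have := H z; rewrite hz inE /=.
    by move/negbFE.
  by rewrite cards1 => h; have := leq_trans h2 h.
move: hw; rewrite inE => /andP [w2 w1].
exists V1, (w |: V2); split; last first.
  have -> : V1 :&: (w |: V2) = w |: (V1 :&: V2) by rewrite setIUr (setIidPr _) // sub1set.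
  by rewrite cardsU1 inE (negbTE w2) andbF.
split.
- rewrite -hU; apply/setP => z; rewrite !inE; case: (eqVneq z w) => [->|_] /=; by rewrite ?w1.
- move=> p q hp hq hq2 hq1; move: hq hq2; rewrite !inE negb_or => /andP [pw pV2] hq2.
  case/orP: hq2 => [/eqP qw|]; first by rewrite qw w1 in hq1.
  by move=> q2; apply: hne.
- exists x; move: hx; rewrite !inE negb_or => /andP [-> ->]; by rewrite eq_sym hwx.
- by exists y; move: hy; rewrite !inE => /andP [-> ->]; rewrite orbT.
Qed.

Lemma aug S V1 V2 : gsep S V1 V2 -> #|V1 :&: V2| < 2 -> 4 <= #|S| ->
  exists V1' V2', gsep S V1' V2' /\ #|V1' :&: V2'| = (#|V1 :&: V2|).+1.
Proof.
move=> hg hX hS.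
case: (leqP 2 #|V1 :\: V2|) => h1; first exact: aug1.
case: (leqP 2 #|V2 :\: V1|) => h2.
  have [V1' [V2' [hg' hc]]] := aug1 (gsep_sw hg) h2.
  by exists V1', V2'; split => //; rewrite hc setIC.
case: hg => hU _ _ _; have := card_split hU.
move: h1 h2 hX; rewrite !ltnS => h1 h2 hX.
have := leq_add (leq_add h1 h2) hX => h3 h4.
by have := leq_trans hS (leq_trans h4 h3).
Qed.

Lemma gsep_sepd S V1 V2 : gsep S V1 V2 -> #|V1 :&: V2| <= 2 -> 4 <= #|S| ->
  exists V1' V2' u v, [/\ sepd V1' V2' u v, V1' :|: V2' = S,
     exists x, x \in V2' :\: V1' & exists y, y \in V1' :\: V2'].
Proof.
move=> hg hX hS.
have [V1' [V2' [hg' hc]]] : exists V1' V2', gsep S V1' V2' /\ #|V1' :&: V2'| = 2.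
  case: (ltnP #|V1 :&: V2| 2) => h; last first.
    by exists V1, V2; split => //; apply/eqP; rewrite eqn_leq hX h.
  have [V1' [V2' [hg' hc]]] := aug hg h hS.
  case: (ltnP #|V1' :&: V2'| 2) => h'; last first.
    by exists V1', V2'; split => //; apply/eqP; rewrite eqn_leq h' andbT hc.
  have [V1'' [V2'' [hg'' hc']]] := aug hg' h' hS.
  exists V1'', V2''; split => //; rewrite hc' hc.
  by move: h' h; rewrite hc; case: #|V1 :&: V2| => [|[|]].
have /cards2P [u [v [uv huv]]] : #|V1' :&: V2'| == 2 by rewrite hc.
case: hg' => hU hne [x hx] [y hy].
exists V1', V2', u, v; split; [by split | done | by exists y | by exists x].
Qed.

End Assembly.


Definition Ein (S : {set T}) := fun x y => [&& x \in S, y \in S & e x y].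

Lemma sep_or (S : {set T}) : 3 < #|S| ->
  k_connected 3 S (Ein S) \/
  exists V1 V2 u v, [/\ sepd V1 V2 u v, V1 :|: V2 = S,
     exists x, x \in V2 :\: V1 & exists y, y \in V1 :\: V2].
Proof.
move=> hS.
pose Rb (X : {set T}) := fun a b => [&& a \in S :\: X, b \in S :\: X & Ein S a b].
case: (boolP [exists X : {set T}, [&& X \subset S, #|X| < 3 &
   [exists p, [exists q, [&& p \in S :\: X, q \in S :\: X & ~~ connect (Rb X) p q]]]]]).
- case/existsP => X /and3P [XS X3 /existsP [p /existsP [q /and3P [pX qX npq]]]].
  right.
  have [C hC] : {C : {set T} | forall w, (w \in C) = connect (Rb X) p w}.
    by exists [set w | connect (Rb X) p w] => w; rewrite inE.
  have clC : forall w, w \in C -> w \in S :\: X.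
    move=> w; rewrite hC => hw.
    have cl : closed (Rb X) (S :\: X).
      by move=> a b /and3P [ha hb _]; rewrite ha hb.
    by rewrite -(closed_connect cl hw).
  have pC : p \in C by rewrite hC connect0.
  have qC : q \notin C by rewrite hC.
  apply: (@gsep_sepd S (S :\: C) (C :|: X)).
  + split.
    * apply/setP => w; rewrite in_setU in_setD in_setU; case: (boolP (w \in C)) => hw /=.
        by have := clC w hw; rewrite in_setD => /andP [_ ->].
      case: (boolP (w \in X)) => wX; last by rewrite orbF.
      by rewrite (subsetP XS w wX).
    * move=> x y; rewrite in_setD in_setU negb_or => /andP [xC xS] /andP [_ xX].
      move=> hy hy'.
      have yC : y \in C.
        case: (boolP (y \in C)) => // yC; move: hy hy'; rewrite in_setU in_setD (negbTE yC) /=.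
        by move=> yX; rewrite (subsetP XS y yX).
      apply/negP => exy; case/negP: xC; rewrite hC.
      apply: (connect_trans (y := y)); first by rewrite -hC.
      apply: connect1; have := clC y yC; rewrite /Rb /Ein !in_setD => /andP [yX yS].
      by rewrite yX yS xX xS e_sym exy.
    * exists q; move: qX; rewrite !in_setD in_setU => /andP [qX qS].
      by rewrite qS (negbTE qC) (negbTE qX).
    * by exists p; rewrite !in_setD !in_setU pC.
  + apply: leq_trans (subset_leq_card _) _; last by rewrite -ltnS; exact: X3.
    apply/subsetP => w; rewrite in_setI in_setD in_setU => /andP [/andP [wC _] /orP [hw|//]].
    by rewrite hw in wC.
  + exact: hS.
- move=> H; left; split => //.
  move=> X XS X3 p q hp hq.
  apply/negPn/negP => npq; case/negP: H; apply/existsP; exists X.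
  rewrite XS X3 /=; apply/existsP; exists p; apply/existsP; exists q.
  by rewrite hp hq npq.
Qed.

Lemma small_col (S : {set T}) : #|S| <= 3 -> exists c0 : T -> 'I_m.-1, is_colouring S e c0.
Proof.
move=> hS.
have hm1 : 0 < m.-1 by rewrite -ltnS prednK; [apply: leq_trans hm | apply: leq_trans hm].
have hm3 : 3 <= m.-1 by rewrite -ltnS prednK; [apply: hm | apply: leq_trans hm].
exists (fun w => insubd (Ordinal hm1) (index w (enum S))).
move=> x y xS yS exy; apply/negP => /eqP E.
have : index x (enum S) = index y (enum S).
  have ix : index x (enum S) < m.-1.
    by apply: leq_trans _ hm3; apply: leq_trans _ hS; rewrite cardE index_mem mem_enum.
  have iy : index y (enum S) < m.-1.
    by apply: leq_trans _ hm3; apply: leq_trans _ hS; rewrite cardE index_mem mem_enum.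
  by move: (congr1 val E); rewrite !val_insubd ix iy.
move=> hi.
have : x = y.
  have ex : nth x (enum S) (index x (enum S)) = x by apply: nth_index; rewrite mem_enum.
  have ey : nth x (enum S) (index y (enum S)) = y.
    by rewrite (set_nth_default y) ?nth_index ?mem_enum // index_mem mem_enum.
  by rewrite -{1}ex hi ey.
by move=> xy; rewrite xy e_irr in exy.
Qed.

Lemma K4 (hfrag : fragile m e) p q r s :
  [&& e p q, e p r, e p s, e q r, e q s & e r s] -> 5 <= m.
Proof.
move=> /and5P [pq pr ps qr /andP [qs rs]].
pose S0 := [set p; q; r; s].
have hsub : is_subgraph e S0 (Ein S0).
  split; first by move=> x y; rewrite /Ein andbCA e_sym.
  by move=> x y /and3P [-> -> ->].
have adj : forall x y, x \in S0 -> y \in S0 -> x != y -> e x y.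
  move=> x y; rewrite !inE => hx hy xy.
  have H4 : forall z, (z == p) || (z == q) || (z == r) || (z == s) ->
    (z = p) \/ (z = q) \/ (z = r) \/ (z = s).
    by move=> z /orP [/orP [/orP [/eqP ->|/eqP ->]|/eqP ->]|/eqP ->]; tauto.
  move: xy; case: (H4 x hx) => [->|[->|[->|->]]]; case: (H4 y hy) => [->|[->|[->|->]]];
  rewrite ?eqxx // => _; by rewrite // e_sym.
have ne : forall x y, e x y -> x != y by move=> x y exy; apply/negP => /eqP E; move: exy; rewrite E e_irr.
have c4 : 4 <= #|S0|.
  have pq' := ne _ _ pq; have pr' := ne _ _ pr; have ps' := ne _ _ ps.
  have qr' := ne _ _ qr; have qs' := ne _ _ qs; have rs' := ne _ _ rs.
  have u4 : uniq [:: p; q; r; s] by rewrite /= !inE !negb_or pq' pr' ps' qr' qs' rs'.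
  have /card_uniqP hc := u4; apply: leq_trans (_ : size [:: p; q; r; s] <= _) => //; rewrite -hc; apply: subset_leq_card; apply/subsetP => z.
  by rewrite !inE -!orbA.
have hk : k_connected 3 S0 (Ein S0).
  split; first by [].
  move=> X _ _ x y hx hy; case: (eqVneq x y) => [->|xy]; first exact: connect0.
  apply: connect1; rewrite /= hx hy /Ein /=.
  move: hx hy; rewrite !in_setD => /andP [_ hx] /andP [_ hy].
  by rewrite hx hy adj.
have [c hc] := hfrag S0 (Ein S0) hsub hk.
have inj : {in S0 &, injective c}.
  move=> x y hx hy E; apply/eqP; apply/negP => /negP xy.
  by have := hc x y hx hy; rewrite /Ein hx hy adj // E eqxx => /(_ isT).
have := max_card (mem [set c x | x in S0]).
rewrite card_in_imset // card_ord => h.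
have := leq_trans c4 h; by rewrite -ltnS (ltn_predK hm).
Qed.

Lemma allGood (hfrag : fragile m e) : forall S, Good S.
Proof.
have hK := K4 hfrag.
move=> S; have [n] := ubnP #|S|; elim: n S => // n IH S hn.
case: (leqP #|S| 3) => hS3.
  have [c0 h0] := small_col hS3; exact: spareGood h0.
case: (sep_or hS3) => [hk|[V1 [V2 [u [v [hsep hU [x hx] [y hy]]]]]]].
  have hsub : is_subgraph e S (Ein S).
    split; first by move=> a b; rewrite /Ein andbCA e_sym.
    by move=> a b /and3P [-> -> ->].
  have [c0 h0] := hfrag S (Ein S) hsub hk.
  apply: (spareGood (c0 := c0)) => a b ha hb hab; apply: h0 => //.
  by rewrite /Ein ha hb hab.
have lt1 : #|V1| < #|S|.
  apply: proper_card; apply/properP; split; first by rewrite -hU subsetUl.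
  exists x; first by rewrite -hU inE; move: hx; rewrite inE => /andP [_ ->]; rewrite orbT.
  by move: hx; rewrite inE => /andP [].
have lt2 : #|V2| < #|S|.
  apply: proper_card; apply/properP; split; first by rewrite -hU subsetUr.
  exists y; first by rewrite -hU inE; move: hy; rewrite inE => /andP [_ ->].
  by move: hy; rewrite inE => /andP [].
apply: (GoodS hK hsep (S := S)); first by rewrite hU.
  by apply: IH; apply: leq_trans lt1 _; rewrite -ltnS.
by apply: IH; apply: leq_trans lt2 _; rewrite -ltnS.
Qed.

End Main.

Lemma two_card m (a b d : 'I_m) : two a b d -> #|[set a; b; d]| = 2.
Proof.
case/or3P => /andP [/eqP E N]; subst.
- have -> : [set b; b; d] = [set b; d].
    by apply/setP => z; rewrite !inE; case: (z == b); case: (z == d).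
  by rewrite cards2 N.
- have -> : [set d; b; d] = [set d; b].
    by apply/setP => z; rewrite !inE; case: (z == b); case: (z == d).
  by rewrite cards2 N.
- have -> : [set a; d; d] = [set a; d].
    by apply/setP => z; rewrite !inE; case: (z == a); case: (z == d).
  by rewrite cards2 N.
Qed.

Unset Implicit Arguments. Set Strict Implicit. Set Printing Implicit Defensive.

Theorem theorem3 (T : finType) (e : rel T) (m : nat)
  (e_sym : symmetric e) (e_irr : irreflexive e) (hm : 4 <= m)
  (hfrag : fragile m e) :
  (forall x y : T, ~~ e x y ->
     exists c : T -> 'I_m, is_colouring [set: T] e c /\ c x = c y) /\
  (forall x y : T, x != y ->
     exists c : T -> 'I_m, is_colouring [set: T] e c /\ c x != c y) /\
  (forall x y z : T, [&& x != y, y != z & x != z] ->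
     exists c : T -> 'I_m, is_colouring [set: T] e c /\
       c x \notin [:: c y; c z]) /\
  (forall x y z : T, [&& x != y, y != z & x != z] ->
     ~~ [&& e x y, e y z & e x z] ->
     exists c : T -> 'I_m, is_colouring [set: T] e c /\
       #|[set c x; c y; c z]| = 2).
Proof.
have [_ q1 q2 q3 q4] := allGood e_sym e_irr hm hfrag [set: T].
split; [|split; [|split]].
- move=> x y nxy; exact: (q1 x y (in_setT x) (in_setT y) nxy).
- move=> x y xy; exact: (q2 x y (in_setT x) (in_setT y) xy).
- move=> x y z d; have [c [hc H]] := q3 x y z (in_setT x) (in_setT y) (in_setT z) d.
  by exists c; split => //; rewrite !inE negb_or.
- move=> x y z d nt; have [c [hc H]] := q4 x y z (in_setT x) (in_setT y) (in_setT z) d nt.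
  by exists c; split => //; apply: two_card.
Qed.
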